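(* Consider an attack graph $G=(V,\mathcal{E})$ with source $v_s$ and a single defender $D_k$ owning assets $V_k\subseteq V\setminus\{v_s\}$ with losses $L_m\in[0,\infty)$, with investment vector $x_k=(x_{i,j})_{(v_i,v_j)\in\mathcal{E}}\in\mathbb{R}^{|\mathcal{E}|}_{\ge0}$. Assume every edge attack success probability function $p_{i,j}:[0,\infty)\to[0,1]$ is log-convex, strictly decreasing, and twice continuously differentiable on $[0,\infty)$, and let $\alpha_k\in(0,1]$. Then the perceived expected cost $$C_k(x_k)=\sum_{v_m\in V_k}L_m\max_{P\in\mathcal{P}_m}\prod_{(v_i,v_j)\in P}\exp\Big[-\big(-\log p_{i,j}(x_{i,j})\big)^{\alpha_k}\Big]$$ is convex in $x_k$.
   Context: An attack graph is a finite directed graph with a designated source node $v_s$; $\mathcal{P}_m$ denotes the (nonempty) set of directed paths from $v_s$ to $v_m$, each path viewed as its set of edges. $p_{i,j}(x_{i,j})$ is the probability that an attack from $v_i$ on $v_j$ succeeds given investment $x_{i,j}$ on that edge; $p\mapsto\exp[-(-\log p)^{\alpha_k}]$ is the Prelec probability weighting function. *)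

(* Defs.v *)
From HB Require Import structures.
From mathcomp Require Import all_boot all_order all_algebra.
From mathcomp Require Import all_classical all_reals all_analysis.
Set Implicit Arguments. Unset Strict Implicit. Unset Printing Implicit Defensive.
Import Order.TTheory GRing.Theory Num.Theory.
Import numFieldNormedType.Exports.
Local Open Scope ring_scope.
Local Open Scope classical_set_scope.

Definition edge (V : finType) (E : rel V) := {e : V * V | E e.1 e.2}.

(* P (a set of edges) is the edge set of a directed path from vs to vm
   (simple path: no repeated vertex). *)
Definition is_path_edges (V : finType) (E : rel V) (vs vm : V)
  (P : {set edge E}) : Prop :=
  exists s : seq V,
    [/\ uniq (vs :: s), path E vs s, last vs s = vm &
        P = finset (fun e : edge E => val e \in zip (vs :: s) s)].

Definition paths_to (V : finType) (E : rel V) (vs vm : V) : {set {set edge E}} :=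
  finset (fun P : {set edge E} => `[< is_path_edges vs vm P >]).

Definition prelec (R : realType) (alpha p : R) : R :=
  expR (- ((- ln p) `^ alpha)).

Definition perceived_cost (R : realType) (V : finType) (E : rel V) (vs : V)
  (Vk : {set V}) (L : V -> R) (p : edge E -> R -> R) (alpha : R)
  (x : edge E -> R) : R :=
  \sum_(m in Vk) L m *
     \big[Num.max/0]_(P in paths_to E vs m)
        \prod_(e in P) prelec alpha (p e (x e)).

Definition convex_on_nonneg (R : realType) (f : R -> R) : Prop :=
  forall x y t : R, 0 <= x -> 0 <= y -> 0 <= t <= 1 ->
    f (t * x + (1 - t) * y) <= t * f x + (1 - t) * f y.

Definition log_convex_nonneg (R : realType) (f : R -> R) : Prop :=
  convex_on_nonneg (fun x => ln (f x)).

Definition strictly_decreasing_nonneg (R : realType) (f : R -> R) : Prop :=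
  forall x y : R, 0 <= x -> x < y -> f y < f x.

(* twice continuously differentiable on [0, +oo): f is twice differentiable
   on (0, +oo) with continuous second derivative there, f is right-continuous
   at 0, and f', f'' extend continuously to 0 (have finite right limits). *)
Definition C2_nonneg (R : realType) (f : R -> R) : Prop :=
  [/\ forall x : R, 0 < x -> derivable f x 1 /\ derivable f^`() x 1,
      forall x : R, 0 < x -> {for x, continuous (f^`(2) : R -> R)},
      f x @[x --> (0 : R)^'+] --> f 0,
      cvg (f^`() x @[x --> (0 : R)^'+]) &
      cvg (f^`(2) x @[x --> (0 : R)^'+])].

Definition convex_on_orthant (R : realType) (I : Type) (C : (I -> R) -> R) : Prop :=
  forall (x y : I -> R) (t : R),
    (forall i, 0 <= x i) -> (forall i, 0 <= y i) -> 0 <= t <= 1 ->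
    C (fun i => t * x i + (1 - t) * y i) <= t * C x + (1 - t) * C y.

(* Main.v *)
Require Import Defs.
From HB Require Import structures.
From mathcomp Require Import all_boot all_order all_algebra.
From mathcomp Require Import all_classical all_reals all_analysis.
From mathcomp Require Import ring.
Import Order.TTheory GRing.Theory Num.Theory.
Import numFieldNormedType.Exports.
Local Open Scope ring_scope.

Lemma cexp (R : realType) (t a b : R) : 0 <= t <= 1 -> expR (t * a + (1 - t) * b) <= t * expR a + (1 - t) * expR b.
Proof.
move=> /andP[t0 t1].
have P : Itv.spec (@Itv.num_sem R) (Itv.Real `[0%Z, 1%Z]) t.
  by rewrite /= /Itv.num_sem /= in_itv /= t0 t1 ger0_real.
have := convex_expR (@Itv.Def _ _ (Itv.Real `[0%Z, 1%Z]) t P) a b.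
by rewrite !convRE /=.
Qed.

Lemma bigmax_conv (R : realType) (T : finType) (S : {set T}) (F G1 G2 : T -> R) (t : R) :
  0 <= t <= 1 -> (forall i, i \in S -> F i <= t * G1 i + (1 - t) * G2 i) ->
  \big[Num.max/0]_(i in S) F i <=
  t * \big[Num.max/0]_(i in S) G1 i + (1 - t) * \big[Num.max/0]_(i in S) G2 i.
Proof.
move=> /andP[t0 t1] H.
have t1' : 0 <= 1 - t by rewrite subr_ge0.
have ge0 : forall G : T -> R, 0 <= \big[Num.max/0]_(i in S) G i.
  move=> G; elim/big_rec: _ => [//|i v _ hv]; by rewrite le_max hv orbT.
have leb : forall (G : T -> R) i, i \in S -> G i <= \big[Num.max/0]_(j in S) G j.
  by move=> G i iS; rewrite (bigD1 i) //= le_max lexx.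
elim/big_rec: _ => [|i v iS hv]; first by rewrite addr_ge0 // mulr_ge0.
rewrite ge_max hv andbT.
apply: (le_trans (H i iS)); apply: lerD; apply: ler_wpM2l => //; exact: leb.
Qed.
Lemma bern (R : realType) (c a : R) : 0 <= c -> 0 < a <= 1 ->
  c `^ a <= a * c + (1 - a).
Proof.
move=> c0 /andP[a0 a1].
have [->|a1'] := eqVneq a 1; first by rewrite powRr1 // mul1r subrr addr0.
have a1s : a < 1 by rewrite lt_neqAle a1' a1.
have := @conjugate_powR R (c `^ a) 1 a^-1 (1 - a)^-1 (powR_ge0 _ _) ler01.
rewrite invr_gt0 a0 invr_gt0 subr_gt0 a1s (invrK a) (invrK (1 - a)) addrC subrK => /(_ isT isT erefl).
rewrite mulr1 -powRrM mulfV ?gt_eqF // powRr1 // powR1 mul1r (mulrC c).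
by [].
Qed.

Lemma cpow (R : realType) (a b t al : R) : 0 <= a -> 0 <= b -> 0 <= t <= 1 -> 0 < al <= 1 ->
  t * a `^ al + (1 - t) * b `^ al <= (t * a + (1 - t) * b) `^ al.
Proof.
move=> a0 b0 /andP[t0 t1] hal; have /andP[al0 al1] := hal.
have t1' : 0 <= 1 - t by rewrite subr_ge0.
set s := t * a + (1 - t) * b.
have s0 : 0 <= s by rewrite addr_ge0 // mulr_ge0.
have [s00|spos] := eqVneq s 0.
  have ta : t * a = 0.
    apply/eqP; rewrite eq_le mulr_ge0 // andbT -s00 /s lerDl mulr_ge0 //.
  have tb : (1 - t) * b = 0.
    apply/eqP; rewrite eq_le mulr_ge0 // andbT -s00 /s lerDr mulr_ge0 //.
  have h1 : forall u v : R, 0 <= v -> u * v = 0 -> u * v `^ al = 0.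
    move=> u v v0 /eqP; rewrite mulf_eq0 => /orP[/eqP->|/eqP->]; first by rewrite mul0r.
    by rewrite powR0 ?mulr0 // gt_eqF.
  by rewrite s00 h1 // h1 // addr0 powR_ge0.
have sp : 0 < s by rewrite lt_neqAle eq_sym spos s0.
have ha : a = s * (a / s) by rewrite mulrCA mulfV // mulr1.
have hb : b = s * (b / s) by rewrite mulrCA mulfV // mulr1.
have hA : a `^ al = s `^ al * (a / s) `^ al by rewrite -powRM ?divr_ge0 // -ha.
have hB : b `^ al = s `^ al * (b / s) `^ al by rewrite -powRM ?divr_ge0 // -hb.
rewrite hA hB.
rewrite mulrCA (mulrCA (1 - t)) -mulrDr ler_piMr ?powR_ge0 //.
have hA' := @bern R (a/s) al (divr_ge0 a0 s0) hal.
have hB' := @bern R (b/s) al (divr_ge0 b0 s0) hal.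
apply: (le_trans (lerD (ler_wpM2l t0 hA') (ler_wpM2l t1' hB'))).
have e : forall u, t*(al*(a*u)+(1-al)) + (1-t)*(al*(b*u)+(1-al)) = al*((t*a+(1-t)*b)*u) + (1-al).
  by move=> u; ring.
rewrite e -/s mulfV ?gt_eqF // mulr1 addrC subrK.
by [].
Qed.

Arguments cpow {R a b t al}.
Arguments cexp {R t} a b.
Arguments bigmax_conv {R T S F G1 G2 t}.

Theorem lemma2 (R : realType) (V : finType) (E : rel V) (vs : V)
  (Vk : {set V}) (L : V -> R) (p : edge E -> R -> R) (alpha : R) :
  vs \notin Vk ->
  (forall m, m \in Vk -> 0 <= L m) ->
  (forall m, m \in Vk -> paths_to E vs m != finset.set0) ->
  (forall e x, 0 <= x -> 0 <= p e x <= 1) ->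
  (forall e, log_convex_nonneg (p e)) ->
  (forall e, strictly_decreasing_nonneg (p e)) ->
  (forall e, C2_nonneg (p e)) ->
  0 < alpha <= 1 ->
  convex_on_orthant (@perceived_cost R V E vs Vk L p alpha).
Proof.
move=> _ HL _ Hp Hlc Hdec _ hal x y t hx hy ht.
have /andP[t0 t1] := ht.
have t1' : 0 <= 1 - t by rewrite subr_ge0.
have ppos : forall e z, 0 <= z -> 0 < p e z.
  move=> e z z0; have /andP[h0 _] := Hp e (z + 1) (addr_ge0 z0 ler01).
  apply: (le_lt_trans h0); apply: Hdec => //; by rewrite ltrDl.
pose f e z := (- ln (p e z)) `^ alpha.
have fconc : forall e a b, 0 <= a -> 0 <= b ->
    t * f e a + (1 - t) * f e b <= f e (t * a + (1 - t) * b).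
  move=> e a b a0 b0.
  have h0 : forall z, 0 <= z -> 0 <= - ln (p e z).
    by move=> z z0; rewrite oppr_ge0 ln_le0 //; have /andP[] := Hp e z z0.
  have c0 : 0 <= t * a + (1 - t) * b by rewrite addr_ge0 // mulr_ge0.
  rewrite /f; apply: (le_trans (cpow (h0 a a0) (h0 b b0) ht hal)).
  apply: ge0_ler_powR; first by case/andP: hal => /ltW.
  - by rewrite nnegrE addr_ge0 // mulr_ge0 // h0.
  - by rewrite nnegrE h0.
  have := Hlc e a b t a0 b0 ht; rewrite /= => hh.
  by rewrite -lerN2 opprK opprD -!mulrN !opprK.
have term : forall P : {set edge E},
    \prod_(e in P) prelec alpha (p e (t * x e + (1 - t) * y e)) <=
    t * \prod_(e in P) prelec alpha (p e (x e)) +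
    (1 - t) * \prod_(e in P) prelec alpha (p e (y e)).
  move=> P; rewrite /prelec -!expR_sum.
  apply: le_trans (cexp _ _ ht).
  rewrite ler_expR !mulr_sumr -big_split /=; apply: ler_sum => e _.
  rewrite !mulrN -opprD lerN2; exact: fconc.
rewrite /perceived_cost !mulr_sumr -big_split /=; apply: ler_sum => m mV.
rewrite mulrCA (mulrCA (1 - t)) -mulrDr; apply: ler_wpM2l; first exact: HL.
exact: bigmax_conv.
Qed.
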